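(* Let $(\mathcal V,\{C_n\}_n,e)$ be an operator system and $p\in\mathcal V$ a positive contraction ($0\le p\le e$) with $\alpha_m(p)=1$. Then $(\mathcal V/J_p,\{\widetilde C(p_n)\}_n,p+J_p)$ is an operator system, and it is non-trivial, i.e. $p\notin J_p$.
   Context: An operator system is a $*$-vector space with a proper matrix ordering $\{C_n\}$ ($C_n\subseteq M_n(\mathcal V)_h$) and Archimedean matrix order unit $e$; $e_n=I_n\otimes e$, $p_n=I_n\otimes p$. Define $C(p_n)=\{x\in M_n(\mathcal V): x=x^*,\ \forall\epsilon>0\ \exists t>0 \text{ such that } x+\epsilon p_n+t(e_n-p_n)\in C_n\}$, $J_p=\operatorname{span}(C(p)\cap -C(p))$, and $\widetilde C(p_n)=\{(x_{ij}+J_p)\in M_n(\mathcal V/J_p): (x_{ij})\in C(p_n)\}$. The minimal order norm is $\alpha_m(x)=\sup\{|\varphi(x)|:\varphi \text{ a state on } \mathcal V\}$. *)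

(* Defs.v *)
From HB Require Import structures.
From mathcomp Require Import all_boot all_order all_algebra.
From mathcomp Require Import complex.
From mathcomp Require Import classical_sets reals.
Set Implicit Arguments. Unset Strict Implicit. Unset Printing Implicit Defensive.
Import Order.TTheory GRing.Theory Num.Theory.
Local Open Scope ring_scope.
Local Open Scope complex_scope.

Section OpSys.
Variable R : realType.
Local Notation C := R[i].
Variable V : lmodType C.

Definition is_involution (star : V -> V) : Prop :=
  (forall (a : C) (x y : V), star (a *: x + y) = (conjc a) *: star x + star y) /\
  (forall x, star (star x) = x).

Definition is_subspace (J : V -> Prop) : Prop :=
  J 0 /\ (forall (a : C) x y, J x -> J y -> J (a *: x + y)).

Definition mx_star (star : V -> V) n (x : 'M[V]_n) : 'M[V]_n :=
  \matrix_(i, j) star (x j i).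

(* x = y in M_n(V/J) *)
Definition mx_eqmod (J : V -> Prop) n (x y : 'M[V]_n) : Prop :=
  forall i j, J (x i j - y i j).

Definition diagv n (v : V) : 'M[V]_n := \matrix_(i, j) if i == j then v else 0.

Definition mx1 (v : V) : 'M[V]_1 := const_mx v.

Definition mx_conj_act n m (alpha : 'M[C]_(n, m)) (x : 'M[V]_n) : 'M[V]_m :=
  \matrix_(i, j) \sum_(k < n) \sum_(l < n) (conjc (alpha k i) * alpha l j) *: x k l.

Definition mx_rscale n (r : R) (x : 'M[V]_n) : 'M[V]_n := map_mx ( *:%R r%:C) x.

(* The set of cosets  {x + M_n(J) : x in K n}, represented in M_n(V). *)
Definition sat (J : V -> Prop) (K : forall n, 'M[V]_n -> Prop) n (x : 'M[V]_n) : Prop :=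
  exists y, K n y /\ mx_eqmod J x y.

(* (V/J, {K_n + M_n(J)}_n, u + J) is an operator system.  All statements are
   about cosets, expressed on representatives; for J = {0} this is the usual
   notion of an operator system (V, {K_n}, u). *)
Definition opsys_mod (star : V -> V) (J : V -> Prop)
    (K : forall n, 'M[V]_n -> Prop) (u : V) : Prop :=
  let Kt := sat J K in
  let herm n (x : 'M[V]_n) := mx_eqmod J (mx_star star x) x in
  is_involution star /\ is_subspace J /\ (forall v, J v -> J (star v)) /\
  (forall n x, Kt n x -> herm n x) /\
  (forall n x y, Kt n x -> Kt n y -> Kt n (x + y)) /\
  (forall n (r : R) x, 0 <= r -> Kt n x -> Kt n (mx_rscale r x)) /\
  (forall n m (alpha : 'M[C]_(n, m)) x, Kt n x -> Kt m (mx_conj_act alpha x)) /\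
  (forall n x, Kt n x -> Kt n (- x) -> mx_eqmod J x 0) /\
  J (star u - u) /\
  (forall n x, herm n x -> exists r : R, 0 < r /\ Kt n (x + mx_rscale r (diagv n u))) /\
  (forall n x, herm n x ->
     (forall eps : R, 0 < eps -> Kt n (x + mx_rscale eps (diagv n u))) -> Kt n x).

Definition opsys (star : V -> V) (K : forall n, 'M[V]_n -> Prop) (e : V) : Prop :=
  opsys_mod star (fun v => v = 0) K e.

Definition is_state (K : forall n, 'M[V]_n -> Prop) (e : V) (phi : V -> C) : Prop :=
  [/\ forall (a : C) x y, phi (a *: x + y) = a * phi x + phi y,
      forall v, K 1%N (mx1 v) -> 0 <= phi v &
      phi e = 1].

Definition alpha_m (K : forall n, 'M[V]_n -> Prop) (e : V) (x : V) : R :=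
  sup [set r : R | exists phi, is_state K e phi /\ (r%:C = `|phi x|)%R].

Definition Cp (star : V -> V) (K : forall n, 'M[V]_n -> Prop) (e p : V)
    n (x : 'M[V]_n) : Prop :=
  mx_star star x = x /\
  forall eps : R, 0 < eps -> exists t : R, 0 < t /\
    K n (x + diagv n (eps%:C *: p + t%:C *: (e - p))).

Definition span (S : V -> Prop) (v : V) : Prop :=
  exists s : seq (C * V), (forall ax, ax \in s -> S ax.2) /\
    v = \sum_(ax <- s) ax.1 *: ax.2.

Definition Jp (star : V -> V) (K : forall n, 'M[V]_n -> Prop) (e p : V) : V -> Prop :=
  span (fun v => Cp star K e p (mx1 v) /\ Cp star K e p (mx1 (- v))).

End OpSys.

(* Main.v *)
Require Import Defs.
From HB Require Import structures.
From mathcomp Require Import all_boot all_order all_algebra.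
From mathcomp Require Import complex ring lra.
From mathcomp Require Import classical_sets reals.
From Stdlib Require Import Classical.
Import Order.TTheory GRing.Theory Num.Theory.
Local Open Scope ring_scope.
Local Open Scope complex_scope.
Set Implicit Arguments. Unset Strict Implicit. Unset Printing Implicit Defensive.

Section Mx.
Variable R : realType.
Local Notation C := R[i].

Lemma conjcD (a b : C) : conjc (a + b) = conjc a + conjc b.
Proof. exact: rmorphD. Qed.
Lemma conjcM (a b : C) : conjc (a * b) = conjc a * conjc b.
Proof. exact: rmorphM. Qed.
Lemma conjcN (a : C) : conjc (- a) = - conjc a.
Proof. exact: rmorphN. Qed.
Lemma conjcR (a : R) : conjc (a%:C) = a%:C.
Proof. exact: conjc_real. Qed.

Definition r1 m (w : 'M[C]_(1, m)) : 'M[C]_m :=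
  \matrix_(i, j) (conjc (w 0 i) * w 0 j).

Inductive psd m : 'M[C]_m -> Prop :=
| psd_r1 (w : 'M[C]_(1, m)) : psd (r1 w)
| psd_add A B : psd A -> psd B -> psd (A + B)
| psd_scale (r : R) A : 0 <= r -> psd A -> psd (r%:C *: A).

Lemma psd0 m : psd (0 : 'M[C]_m).
Proof.
have -> : (0 : 'M[C]_m) = r1 0 by apply/matrixP => i j; rewrite !mxE mulr0.
exact: psd_r1.
Qed.

Lemma psd_sum m (I : Type) (s : seq I) (P : pred I) (F : I -> 'M[C]_m) :
  (forall i, P i -> psd (F i)) -> psd (\sum_(i <- s | P i) F i).
Proof.
move=> H; apply: (big_ind (@psd m)); [exact: psd0| exact: psd_add| exact: H].
Qed.

Lemma natr_and (a b : bool) : ((a && b)%:R : C) = a%:R * b%:R.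
Proof. by case: a; case: b; rewrite /= ?mulr1 ?mulr0. Qed.

Lemma psd_diag m (D : 'M[C]_m) :
  (forall k l, k != l -> D k l = 0) -> (forall k, 0 <= D k k) -> psd D.
Proof.
move=> Hoff Hd.
have -> : D = \sum_(k < m) (complex.Re (D k k))%:C *: r1 (delta_mx 0 k : 'M[C]_(1,m)).
  apply/matrixP => i j; rewrite summxE.
  rewrite (bigD1 i) //= big1 ?addr0.
    rewrite !mxE /= eqxx conjc_nat mul1r.
    case: (eqVneq i j) => [<-|ij]; last by rewrite Hoff // mulr0.
    rewrite mulr1 RRe_real //.
    exact: ger0_real.
  move=> k ki; rewrite !mxE /= eq_sym (negbTE ki) conjc_nat !mul0r mulr0 //.
apply: psd_sum => k _; apply: psd_scale; last exact: psd_r1.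
have := Hd k; rewrite lecE /= => /andP [_ ->] //.
Qed.

Lemma psd1 m : psd (1%:M : 'M[C]_m).
Proof.
apply: psd_diag => [k l kl|k]; rewrite mxE ?(negbTE kl) // eqxx mulr1n ler01.

Qed.

Lemma psd_scalar m (c : R) : 0 <= c -> psd (c%:C *: 1%:M : 'M[C]_m).
Proof. by move=> c0; apply: psd_scale => //; exact: psd1. Qed.

Definition hermC m (B : 'M[C]_m) := forall i j, conjc (B i j) = B j i.

Definition goodB m (B : 'M[C]_m) := exists c : R, 0 <= c /\ psd (c%:C *: 1%:M + B).

Lemma goodD m (A B : 'M[C]_m) : goodB A -> goodB B -> goodB (A + B).
Proof.
move=> [c [c0 Hc]] [d [d0 Hd]]; exists (c + d); split; first exact: addr_ge0.
have -> : (c + d)%:C *: 1%:M + (A + B) = (c%:C *: 1%:M + A) + (d%:C *: 1%:M + B).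
  by rewrite rmorphD scalerDl addrACA.
exact: psd_add.
Qed.

Lemma good0 m : goodB (0 : 'M[C]_m).
Proof. by exists 0; split => //; rewrite scale0r addr0; exact: psd0. Qed.

Lemma goodZ m (r : R) (B : 'M[C]_m) : 0 <= r -> goodB B -> goodB (r%:C *: B).
Proof.
move=> r0 [c [c0 Hc]]; exists (r * c); split; first exact: mulr_ge0.
have -> : (r * c)%:C *: 1%:M + r%:C *: B = r%:C *: (c%:C *: 1%:M + B).
  by rewrite scalerDr scalerA rmorphM.
exact: psd_scale.
Qed.

Lemma good_sum m (I : Type) (s : seq I) (P : pred I) (F : I -> 'M[C]_m) :
  (forall i, P i -> goodB (F i)) -> goodB (\sum_(i <- s | P i) F i).
Proof.
move=> H; apply: (big_ind (@goodB m)); [exact: good0| exact: goodD| exact: H].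
Qed.

Lemma good_elem m (i j : 'I_m) (b : C) :
  goodB (b *: delta_mx i j + conjc b *: delta_mx j i).
Proof.
set nb := b * conjc b.
have nb0 : 0 <= nb by exact: mulcJ_ge0.
exists (1 + complex.Re nb); split.
  by apply: addr_ge0 => //; move: nb0; rewrite lecE => /andP [].
have Enb : (complex.Re nb)%:C = nb by apply: RRe_real; exact: ger0_real.
set w : 'M[C]_(1, m) := delta_mx 0 i + b *: delta_mx 0 j.
have -> : (1 + complex.Re nb)%:C *: 1%:M + (b *: delta_mx i j + conjc b *: delta_mx j i)
   = r1 w + ((1 + nb) *: 1%:M - delta_mx i i - nb *: delta_mx j j).
  apply/matrixP => k l; rewrite !mxE rmorphD /= Enb.
  rewrite !natr_and rmorph1 conjcD conjcM !conjc_nat /nb; ring.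
apply: psd_add; first exact: psd_r1.
apply: psd_diag => [k l kl|k]; rewrite !mxE !natr_and.
  have Z : forall a : 'I_m, ((k == a)%:R * (l == a)%:R : C) = 0.
    move=> a; case: (eqVneq k a) => [ka|ka]; last by rewrite mul0r.
    by rewrite -ka eq_sym (negbTE kl) mulr0.
  by rewrite (negbTE kl) mulr0 !Z mulr0 !subr0.
rewrite eqxx mulr1.
case: (k == i); case: (k == j); rewrite /= ?mulr1 ?mulr0 ?subr0.
- by rewrite (_ : 1 + nb - 1 - nb = 0) //; ring.
- by rewrite (_ : 1 + nb - 1 = nb) //; ring.
- by rewrite (_ : 1 + nb - nb = 1) ?ler01 //; ring.
- by apply: addr_ge0 => //; exact: ler01.
Qed.

Lemma halfC : ((2^-1 : R)%:C * 2%:R = 1 :> C).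
Proof.
rewrite -(rmorph_nat (real_complex R) 2) -rmorphM mulVf ?rmorph1 //.
by rewrite pnatr_eq0.
Qed.

Lemma good_herm m (B : 'M[C]_m) : hermC B -> goodB B.
Proof.
move=> HB.
have E2 : B = \sum_(i < m) \sum_(j < m) conjc (B i j) *: delta_mx j i.
  under eq_bigr => i _ do under eq_bigr => j _ do rewrite HB.
  rewrite exchange_big /=; exact: matrix_sum_delta.
have -> : B = \sum_(i < m) \sum_(j < m)
    (2^-1)%:C *: (B i j *: delta_mx i j + conjc (B i j) *: delta_mx j i).
  under eq_bigr => i _ do rewrite -scaler_sumr big_split /=.
  rewrite -scaler_sumr big_split /= -matrix_sum_delta -E2.
  by rewrite -mulr2n -scaler_nat scalerA halfC scale1r.
apply: good_sum => i _; apply: good_sum => j _; apply: goodZ.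
  by rewrite invr_ge0 ler0n.
exact: good_elem.
Qed.

End Mx.
Section Op.
Variable R : realType.
Local Notation C := R[i].
Variable V : lmodType C.
Variable star : V -> V.
Hypothesis Hinv : is_involution star.

Lemma starDZ (a : C) x y : star (a *: x + y) = conjc a *: star x + star y.
Proof. by case: Hinv. Qed.
Lemma starK x : star (star x) = x.
Proof. by case: Hinv. Qed.
Lemma starD x y : star (x + y) = star x + star y.
Proof. by rewrite -(scale1r x) starDZ conjc1 !scale1r. Qed.
Lemma star0 : star 0 = 0.
Proof.
have := starD 0 0; rewrite addr0 => /(congr1 (fun z => z - star 0)).
by rewrite subrr addrK => H; rewrite -H.
Qed.
Lemma starZ (a : C) x : star (a *: x) = conjc a *: star x.
Proof. by rewrite -(addr0 (a *: x)) starDZ star0 addr0. Qed.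
Lemma starN x : star (- x) = - star x.
Proof. by rewrite -scaleN1r starZ conjcN conjc1 scaleN1r. Qed.
Lemma starB x y : star (x - y) = star x - star y.
Proof. by rewrite starD starN. Qed.
Lemma star_sum (I : Type) (s : seq I) (P : pred I) (F : I -> V) :
  star (\sum_(i <- s | P i) F i) = \sum_(i <- s | P i) star (F i).
Proof. exact: (big_morph star starD star0). Qed.

Definition tens m (B : 'M[C]_m) (v : V) : 'M[V]_m := \matrix_(i, j) (B i j *: v).

Lemma tensDl m (A B : 'M[C]_m) v : tens (A + B) v = tens A v + tens B v.
Proof. by apply/matrixP => i j; rewrite !mxE scalerDl. Qed.
Lemma tensDr m (B : 'M[C]_m) v w : tens B (v + w) = tens B v + tens B w.
Proof. by apply/matrixP => i j; rewrite !mxE scalerDr. Qed.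
Lemma tensZl m (B : 'M[C]_m) (k : C) v : tens (k *: B) v = tens B (k *: v).
Proof. by apply/matrixP => i j; rewrite !mxE scalerA mulrC. Qed.
Lemma tensNr m (B : 'M[C]_m) v : tens B (- v) = - tens B v.
Proof. by apply/matrixP => i j; rewrite !mxE scalerN. Qed.
Lemma tensNl m (B : 'M[C]_m) v : tens (- B) v = - tens B v.
Proof. by apply/matrixP => i j; rewrite !mxE scaleNr. Qed.
Lemma diagv_tens n (v : V) : diagv n v = tens 1%:M v.
Proof.
apply/matrixP => i j; rewrite !mxE.
by case: (i == j); rewrite ?mulr1n ?mulr0n ?scale1r ?scale0r.
Qed.
Lemma rscale_tens m (r : R) (B : 'M[C]_m) v :
  mx_rscale r (tens B v) = tens (r%:C *: B) v.
Proof. by apply/matrixP => i j; rewrite !mxE scalerA. Qed.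
Lemma rscaleD m (r : R) (x y : 'M[V]_m) :
  mx_rscale r (x + y) = mx_rscale r x + mx_rscale r y.
Proof. by apply/matrixP => i j; rewrite !mxE scalerDr. Qed.
Lemma rscaleN m (r : R) (x : 'M[V]_m) : mx_rscale r (- x) = - mx_rscale r x.
Proof. by apply/matrixP => i j; rewrite !mxE scalerN. Qed.
Lemma diagvD n (v w : V) : diagv n (v + w) = diagv n v + diagv n w.
Proof. by rewrite !diagv_tens tensDr. Qed.
Lemma rscale_diagv n (r : R) (v : V) : mx_rscale r (diagv n v) = diagv n (r%:C *: v).
Proof. by rewrite !diagv_tens rscale_tens tensZl. Qed.

Definition cact n m (alpha : 'M[C]_(n, m)) (B : 'M[C]_n) : 'M[C]_m :=
  \matrix_(i, j) \sum_(k < n) \sum_(l < n) (conjc (alpha k i) * alpha l j) * B k l.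

Lemma conj_act_tens n m (alpha : 'M[C]_(n, m)) B v :
  mx_conj_act alpha (tens B v) = tens (cact alpha B) v.
Proof.
apply/matrixP => i j; rewrite !mxE scaler_suml; apply: eq_bigr => k _.
rewrite scaler_suml; apply: eq_bigr => l _; by rewrite !mxE scalerA.
Qed.

Lemma conj_act_mx1 m (w : 'M[C]_(1, m)) v : mx_conj_act w (mx1 v) = tens (r1 w) v.
Proof.
by apply/matrixP => i j; rewrite !mxE !big_ord1 !mxE.
Qed.

Lemma conj_actD n m (alpha : 'M[C]_(n, m)) (x y : 'M[V]_n) :
  mx_conj_act alpha (x + y) = mx_conj_act alpha x + mx_conj_act alpha y.
Proof.
apply/matrixP => i j; rewrite !mxE -big_split; apply: eq_bigr => k _.
rewrite -big_split; apply: eq_bigr => l _; by rewrite !mxE scalerDr.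
Qed.
Lemma conj_actN n m (alpha : 'M[C]_(n, m)) (x : 'M[V]_n) :
  mx_conj_act alpha (- x) = - mx_conj_act alpha x.
Proof.
apply/matrixP => i j; rewrite !mxE -sumrN; apply: eq_bigr => k _.
rewrite -sumrN; apply: eq_bigr => l _; by rewrite !mxE scalerN.
Qed.

Lemma cact_herm n m (alpha : 'M[C]_(n, m)) B : hermC B -> hermC (cact alpha B).
Proof.
move=> HB i j; rewrite !mxE (big_morph _ (@conjcD R) (conjc0 R)) exchange_big /=.
apply: eq_bigr => l _; rewrite (big_morph _ (@conjcD R) (conjc0 R)).
apply: eq_bigr => k _; by rewrite !conjcM conjcK HB (mulrC (alpha l i)).
Qed.

Lemma mx_starD n (x y : 'M[V]_n) : mx_star star (x + y) = mx_star star x + mx_star star y.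
Proof. by apply/matrixP => i j; rewrite !mxE starD. Qed.
Lemma mx_starN n (x : 'M[V]_n) : mx_star star (- x) = - mx_star star x.
Proof. by apply/matrixP => i j; rewrite !mxE starN. Qed.
Lemma mx_star_rscale n r (x : 'M[V]_n) :
  mx_star star (mx_rscale r x) = mx_rscale r (mx_star star x).
Proof. by apply/matrixP => i j; rewrite !mxE starZ conjcR. Qed.
Lemma mx_star_conj n m (alpha : 'M[C]_(n, m)) (x : 'M[V]_n) :
  mx_star star (mx_conj_act alpha x) = mx_conj_act alpha (mx_star star x).
Proof.
apply/matrixP => i j; rewrite !mxE star_sum exchange_big /=.
apply: eq_bigr => l _; rewrite star_sum; apply: eq_bigr => k _.
by rewrite !mxE starZ conjcM conjcK mulrC.
Qed.
Lemma mx_star_tens n (B : 'M[C]_n) v :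
  hermC B -> star v = v -> mx_star star (tens B v) = tens B v.
Proof. by move=> HB Hv; apply/matrixP => i j; rewrite !mxE starZ HB Hv. Qed.
Lemma mx_star_mx1 (v : V) : mx_star star (mx1 v) = mx1 (star v).
Proof. by apply/matrixP => i j; rewrite !mxE. Qed.

Definition mcone (P : forall n, 'M[V]_n -> Prop) :=
  [/\ forall n x y, P n x -> P n y -> P n (x + y),
      forall n (r : R) x, 0 <= r -> P n x -> P n (mx_rscale r x) &
      forall n m (alpha : 'M[C]_(n, m)) x, P n x -> P m (mx_conj_act alpha x)].

Lemma cone_tens P q m (B : 'M[C]_m) : mcone P -> P 1%N (mx1 q) -> psd B -> P m (tens B q).
Proof.
move=> [HD HZ HA] Hq; elim => {B} [w|A B _ HA' _ HB'|r A r0 _ HA'].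
- by rewrite -conj_act_mx1; exact: HA.
- by rewrite tensDl; exact: HD.
- by rewrite -rscale_tens; exact: HZ.
Qed.

End Op.
Section Main.
Variable R : realType.
Local Notation C := R[i].
Variable V : lmodType C.
Variable star : V -> V.
Variable K : forall n, 'M[V]_n -> Prop.
Arguments K : clear implicits.
Variables e p : V.
Hypothesis Hop : opsys star K e.
Hypothesis Hp : K 1%N (mx1 p).
Hypothesis Hep : K 1%N (mx1 (e - p)).

Lemma Hinv : is_involution star.
Proof. by case: Hop. Qed.

Lemma satK n (x : 'M[V]_n) : sat (fun v => v = 0) K x <-> K n x.
Proof.
split.
  move=> [y [Ky Hxy]]; suff -> : x = y by [].
  by apply/matrixP => i j; apply/subr0_eq; exact: Hxy.
by move=> Kx; exists x; split => // i j; rewrite subrr.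
Qed.

Lemma Kherm n (x : 'M[V]_n) : K n x -> mx_star star x = x.
Proof.
move=> Kx; have [_ [_ [_ [H _]]]] := Hop.
have := H n x (proj2 (satK x) Kx) => Hx.
by apply/matrixP => i j; apply/subr0_eq; exact: Hx.
Qed.

Lemma Kcone : mcone K.
Proof.
have [_ [_ [_ [_ [HD [HZ [HA _]]]]]]] := Hop.
split.
- move=> n x y Kx Ky; apply/satK; apply: HD; exact/satK.
- move=> n r x r0 Kx; apply/satK; apply: HZ => //; exact/satK.
- move=> n m alpha x Kx; apply/satK; apply: HA; exact/satK.
Qed.

Lemma KD n (x y : 'M[V]_n) : K n x -> K n y -> K n (x + y).
Proof. by case: Kcone => HD _ _; exact: HD. Qed.

Definition q (a b : R) : V := a%:C *: p + b%:C *: (e - p).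

Lemma qD a b c d : q a b + q c d = q (a + c) (b + d).
Proof. by rewrite /q !rmorphD !scalerDl addrACA. Qed.
Lemma qZ r a b : r%:C *: q a b = q (r * a) (r * b).
Proof. by rewrite /q scalerDr !scalerA !rmorphM. Qed.

Lemma mx1D (u w : V) : mx1 (u + w) = mx1 u + mx1 w.
Proof. by apply/matrixP => i j; rewrite !mxE. Qed.
Lemma mx1Z (r : R) (u : V) : mx1 (r%:C *: u) = mx_rscale r (mx1 u).
Proof. by apply/matrixP => i j; rewrite !mxE. Qed.
Lemma mx1N (u : V) : mx1 (- u) = - mx1 u.
Proof. by apply/matrixP => i j; rewrite !mxE. Qed.

Lemma Kq a b : 0 <= a -> 0 <= b -> K 1%N (mx1 (q a b)).
Proof.
move=> a0 b0; case: Kcone => HD HZ _.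
by rewrite /q mx1D !mx1Z; apply: HD; apply: HZ.
Qed.

Lemma Kdiag n v : K 1%N (mx1 v) -> K n (diagv n v).
Proof. by move=> Kv; rewrite diagv_tens; apply: cone_tens => //; [exact: Kcone| exact: psd1]. Qed.

Lemma starp : star p = p.
Proof. by have := Kherm Hp; rewrite mx_star_mx1 => /matrixP /(_ 0 0); rewrite !mxE. Qed.

Lemma stare : star e = e.
Proof. by have [_ [_ [_ [_ [_ [_ [_ [_ [H _]]]]]]]]] := Hop; apply/subr0_eq. Qed.

Local Notation CP := (@Defs.Cp R V star K e p _).

Lemma Cp0 n : CP (0 : 'M[V]_n).
Proof.
split; first by apply/matrixP => i j; rewrite !mxE star0 //; exact: Hinv.
move=> eps eps0; exists 1; split => //; rewrite add0r; apply: Kdiag.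
by apply: Kq; [exact: ltW|exact: ler01].
Qed.

Lemma CpD n (x y : 'M[V]_n) : CP x -> CP y -> CP (x + y).
Proof.
move=> [hx Hx] [hy Hy]; split; first by rewrite mx_starD ?hx ?hy //; exact: Hinv.
move=> eps eps0.
have e2 : 0 < eps / 2 by rewrite divr_gt0.
have [t1 [t10 K1]] := Hx _ e2; have [t2 [t20 K2]] := Hy _ e2.
exists (t1 + t2); split; first exact: addr_gt0.
have := KD K1 K2; rewrite addrACA -diagvD.
by rewrite -/(q _ _) -/(q _ _) qD (_ : eps / 2 + eps / 2 = eps) //; lra.
Qed.

Lemma CpZ n (r : R) (x : 'M[V]_n) : 0 <= r -> CP x -> CP (mx_rscale r x).
Proof.
move=> r0 [hx Hx].
have [->|rne] := eqVneq r 0.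
  rewrite (_ : mx_rscale 0 x = 0); first exact: Cp0.
  by apply/matrixP => i j; rewrite !mxE scale0r.
have rpos : 0 < r by rewrite lt_def rne r0.
split; first by rewrite mx_star_rscale ?hx //; exact: Hinv.
move=> eps eps0.
have [t [t0 Kt]] := Hx (eps / r) (divr_gt0 eps0 rpos).
exists (r * t); split; first exact: mulr_gt0.
case: Kcone => _ HZ _.
have := HZ _ _ _ r0 Kt; rewrite rscaleD rscale_diagv -/(q _ _) qZ.
by rewrite (_ : r * (eps / r) = eps) // mulrC divfK.
Qed.

Lemma Cp_herm n (x : 'M[V]_n) : CP x -> mx_star star x = x.
Proof. by case. Qed.

Lemma herm1 m : hermC (1%:M : 'M[C]_m).
Proof.
move=> i j; rewrite !mxE eq_sym.
by case: (j == i); rewrite ?mulr1n ?mulr0n ?conjc1 ?conjc0.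
Qed.

Lemma hermN m (B : 'M[C]_m) : hermC B -> hermC (- B).
Proof. by move=> HB i j; rewrite !mxE conjcN HB. Qed.

Lemma Cp_conj n m (alpha : 'M[C]_(n, m)) x : CP x -> CP (mx_conj_act alpha x).
Proof.
move=> [hx Hx]; split; first by rewrite mx_star_conj ?hx //; exact: Hinv.
set A := cact alpha 1%:M.
have [c [c0 Hc]] := good_herm (hermN (cact_herm alpha (@herm1 n))).
set c' := c + 1.
have c'0 : 0 < c' by rewrite /c' ltr_pwDr // ltr01.
have Hc' : psd (c'%:C *: 1%:M - A).
  rewrite (_ : c'%:C *: 1%:M - A = (c%:C *: 1%:M + - A) + 1%:M).
    by apply: psd_add => //; exact: psd1.
  by rewrite /c' rmorphD rmorph1 scalerDl scale1r addrAC.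
move=> eps eps0.
have [t [t0 Kt]] := Hx (eps / c') (divr_gt0 eps0 c'0).
exists (c' * t); split; first exact: mulr_gt0.
case: Kcone => HD HZ HA.
have K1 := HA _ _ alpha _ Kt.
rewrite conj_actD diagv_tens conj_act_tens -/A in K1.
have K2 : K m (tens (c'%:C *: 1%:M - A) (q (eps / c') t)).
  apply: (cone_tens Kcone) => //.
  by apply: Kq; [rewrite ltW // divr_gt0| exact: ltW].
have := HD _ _ _ K1 K2.
rewrite -addrA -tensDl (addrC A) subrK tensZl -diagv_tens -/(q _ _) qZ.
by rewrite (_ : c' * (eps / c') = eps) // mulrC divfK // gt_eqF.
Qed.

Lemma Cp_cone : mcone (@Defs.Cp R V star K e p).
Proof. by split; [exact: CpD| exact: CpZ| exact: Cp_conj]. Qed.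

Lemma Cp_shift n (x : 'M[V]_n) : mx_star star x = x ->
  (forall eps : R, 0 < eps -> CP (x + diagv n (eps%:C *: p))) -> CP x.
Proof.
move=> hx H; split => // eps eps0.
have e2 : 0 < eps / 2 by rewrite divr_gt0.
have [_ /(_ _ e2) [t [t0 Kt]]] := H _ e2.
exists t; split => //.
move: Kt; rewrite -addrA -diagvD -/(q _ _) /q addrA -scalerDl -rmorphD.
by rewrite (_ : eps / 2 + eps / 2 = eps) //; lra.
Qed.

Local Notation J := (Jp star K e p).
Definition gen (v : V) := CP (mx1 v) /\ CP (mx1 (- v)).

Lemma J0 : J 0.
Proof. by exists [::]; split => //; rewrite big_nil. Qed.

Lemma JDZ (a : C) x y : J x -> J y -> J (a *: x + y).
Proof.
move=> [sx [Hsx ->]] [sy [Hsy ->]].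
exists ([seq (a * ax.1, ax.2) | ax <- sx] ++ sy); split.
  move=> ax; rewrite mem_cat => /orP [/mapP [bx bxs ->]|]; [exact: (Hsx _ bxs)| exact: Hsy].
rewrite big_cat big_map /= scaler_sumr; congr (_ + _).
by apply: eq_bigr => ax _; rewrite scalerA.
Qed.

Lemma JD x y : J x -> J y -> J (x + y).
Proof. by move=> Hx Hy; rewrite -(scale1r x); exact: JDZ. Qed.
Lemma JZ (a : C) x : J x -> J (a *: x).
Proof. by move=> Hx; rewrite -(addr0 (a *: x)); apply: JDZ => //; exact: J0. Qed.
Lemma JN x : J x -> J (- x).
Proof. by move=> Hx; rewrite -scaleN1r; exact: JZ. Qed.
Lemma JB x y : J x -> J y -> J (x - y).
Proof. by move=> Hx Hy; apply: JD => //; exact: JN. Qed.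
Lemma Jsum (I : Type) (s : seq I) (P : pred I) (F : I -> V) :
  (forall i, P i -> J (F i)) -> J (\sum_(i <- s | P i) F i).
Proof. move=> H; apply: (big_ind J); [exact: J0| exact: JD| exact: H]. Qed.
Lemma Jsum_in (I : eqType) (s : seq I) (F : I -> V) :
  (forall i, i \in s -> J (F i)) -> J (\sum_(i <- s) F i).
Proof. by move=> H; rewrite big_seq; apply: Jsum. Qed.

Lemma Jgen v : gen v -> J v.
Proof.
move=> Hv; exists [:: (1, v)]; split; first by move=> ax; rewrite inE => /eqP ->.
by rewrite big_cons big_nil addr0 scale1r.
Qed.

Lemma gen_star v : gen v -> star v = v.
Proof.
move=> [[h _] _]; move: h; rewrite mx_star_mx1 => /matrixP /(_ 0 0).
by rewrite !mxE.
Qed.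

Lemma Jstar v : J v -> J (star v).
Proof.
move=> [s [Hs ->]]; rewrite star_sum; last exact: Hinv.
apply: Jsum_in => ax axs; rewrite starZ; last exact: Hinv.
rewrite gen_star; last exact: Hs.
by apply: JZ; apply: Jgen; apply: Hs.
Qed.
Lemma sum_delta2 n (F : 'I_n -> 'I_n -> V) (a b : 'I_n) (c : C) :
  \sum_(k < n) \sum_(l < n) (c * ((k == a)%:R * (l == b)%:R)) *: F k l = c *: F a b.
Proof.
rewrite (bigD1 a) //= [X in _ + X]big1 ?addr0; last first.
  by move=> k ka; apply: big1 => l _; rewrite (negbTE ka) mul0r mulr0 scale0r.
rewrite (bigD1 b) //= [X in _ + X]big1 ?addr0; last first.
  by move=> l lb; rewrite (negbTE lb) !mulr0 scale0r.
by rewrite !eqxx !mulr1.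
Qed.

Lemma sum_delta1 n (F : 'I_n -> 'I_n -> V) (a b : 'I_n) :
  \sum_(k < n) \sum_(l < n) ((k == a)%:R * (l == b)%:R) *: F k l = F a b.
Proof.
rewrite -[RHS]scale1r -sum_delta2; apply: eq_bigr => k _; apply: eq_bigr => l _.
by rewrite mul1r.
Qed.

Lemma conji : conjc ('i : C) = - 'i.
Proof. by apply/eqP; rewrite eq_complex /= oppr0 !eqxx. Qed.
Lemma iNi : (- 'i * 'i : C) = 1.
Proof. by rewrite mulNr -expr2 sqr_i opprK. Qed.

Lemma comb4 (X Y Z W : V) :
  (2^-1 : C) *: ((X + (Y + Z) + W - X - W) +
     (- 'i) *: (X + ('i *: Y - 'i *: Z) + W - X - W)) = Y.
Proof.
have G1 : forall A, X + A + W - X - W = A.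
  by move=> A; rewrite addrAC addrK (addrC X) addrK.
rewrite !G1 scalerBr !scalerA iNi !scale1r addrACA subrr addr0.
have -> : Y + Y = (2%:R : C) *: Y by rewrite scaler_nat mulr2n.
by rewrite scalerA mulVf ?scale1r // pnatr_eq0.
Qed.

Lemma Pent n (x : 'M[V]_n) : CP x -> CP (- x) -> forall i j, J (x i j).
Proof.
move=> Hx Hnx i j.
pose al (u w : C) : 'M[C]_(n, 1) := u *: delta_mx i 0 + w *: delta_mx j 0.
pose f u w := (mx_conj_act (al u w) x) 0 0.
have Jf : forall u w, J (f u w).
  move=> u w; apply: Jgen; split.
    have -> : mx1 (f u w) = mx_conj_act (al u w) x.
      by apply/matrixP => a b; rewrite /f !ord1 !mxE.
    exact: Cp_conj.
  have -> : mx1 (- f u w) = mx_conj_act (al u w) (- x).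
    by rewrite conj_actN; apply/matrixP => a b; rewrite /f !ord1 !mxE.
  exact: Cp_conj.
have fE : forall u w, f u w = (conjc u * u) *: x i i + (conjc u * w) *: x i j
     + (conjc w * u) *: x j i + (conjc w * w) *: x j j.
  move=> u w; rewrite /f mxE.
  have Ha : forall k, al u w k 0 = u * (k == i)%:R + w * (k == j)%:R.
    by move=> k; rewrite !mxE !eqxx !andbT.
  have Hc : forall k l, conjc (al u w k 0) * al u w l 0 =
      conjc u * u * ((k == i)%:R * (l == i)%:R) + conjc u * w * ((k == i)%:R * (l == j)%:R)
    + conjc w * u * ((k == j)%:R * (l == i)%:R) + conjc w * w * ((k == j)%:R * (l == j)%:R).
    by move=> k l; rewrite !Ha conjcD !conjcM !conjc_nat; ring.
  under eq_bigr => k _ do under eq_bigr => l _ do rewrite Hc !scalerDl.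
  under eq_bigr => k _ do rewrite !big_split /=.
  by rewrite !big_split /= !sum_delta2.
have f10 : f 1 0 = x i i.
  by rewrite fE conjc1 conjc0 !mul1r !mul0r !scale0r !addr0 scale1r.
have f01 : f 0 1 = x j j.
  by rewrite fE conjc1 conjc0 !mul1r !mul0r !scale0r !add0r scale1r.
have f11 : f 1 1 = x i i + (x i j + x j i) + x j j.
  by rewrite fE conjc1 !mul1r !scale1r addrA.
have fi : f 1 'i = x i i + ('i *: x i j - 'i *: x j i) + x j j.
  by rewrite fE conjc1 conji !mul1r mulr1 iNi !scale1r scaleNr addrA.
rewrite -(comb4 (x i i) (x i j) (x j i) (x j j)) -f11 -fi -f10 -f01.
apply: JZ; apply: JD; first by apply: JB; [apply: JB|]; apply: Jf.
by apply: JZ; apply: JB; [apply: JB|]; apply: Jf.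
Qed.

Lemma sum_deltaV n (y : 'M[V]_n) :
  \sum_(i < n) \sum_(j < n) tens (delta_mx i j) (y i j) = y.
Proof.
apply/matrixP => a b; rewrite summxE.
under eq_bigr => i _ do rewrite summxE.
under eq_bigr => i _ do under eq_bigr => j _ do rewrite !mxE natr_and (eq_sym a) (eq_sym b).
exact: sum_delta1.
Qed.

Lemma Cp_sum n (I : Type) (s : seq I) (P : pred I) (F : I -> 'M[V]_n) :
  (forall i, P i -> CP (F i)) -> CP (\sum_(i <- s | P i) F i).
Proof.
move=> H; apply: (big_ind (fun y => CP y)); [exact: Cp0| exact: CpD| exact: H].
Qed.

Lemma tens_gen n (i j : 'I_n) (a : C) v :
  gen v -> CP (tens (a *: delta_mx i j + conjc a *: delta_mx j i) v).
Proof.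
move=> [g1 g2].
have [c [c0 Hc]] := good_elem i j a.
set H := (a *: _ + _).
have -> : tens H v = tens (c%:C *: 1%:M + H) v + tens (c%:C *: 1%:M) (- v).
  by rewrite [in RHS]tensDl tensNr addrAC subrr add0r.
have T1 := cone_tens Cp_cone g1 Hc.
have T2 := cone_tens Cp_cone g2 (@psd_scalar _ n c c0).
exact: CpD T1 T2.
Qed.

Definition Mf n (i j : 'I_n) (u : V) : 'M[V]_n :=
  tens (delta_mx i j) u + tens (delta_mx j i) (star u).

Lemma MfD n (i j : 'I_n) u w : Mf i j (u + w) = Mf i j u + Mf i j w.
Proof. rewrite /Mf tensDr starD; last exact: Hinv. by rewrite tensDr addrACA. Qed.
Lemma Mf0 n (i j : 'I_n) : Mf i j 0 = 0.
Proof.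
rewrite /Mf star0; last exact: Hinv.
by apply/matrixP => a b; rewrite !mxE !scaler0 addr0.
Qed.

Lemma Gherm n (x : 'M[V]_n) : mx_star star x = x -> (forall i j, J (x i j)) -> CP x.
Proof.
move=> hx HJ.
have Ex : x = mx_rscale (2^-1) (\sum_(i < n) \sum_(j < n) Mf i j (x i j)).
  rewrite /Mf; under eq_bigr => i _ do rewrite big_split /=.
  rewrite big_split /= sum_deltaV exchange_big /=.
  have Es : forall a b, star (x b a) = mx_star star x a b by move=> a b; rewrite mxE.
  under eq_bigr => a _ do under eq_bigr => b _ do rewrite Es.
  rewrite sum_deltaV hx; apply/matrixP => a b; rewrite !mxE.
  have -> : x a b + x a b = (2%:R : C) *: x a b by rewrite scaler_nat mulr2n.
  rewrite scalerA -(rmorph_nat (real_complex R) 2) -rmorphM.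
  by rewrite mulVf ?rmorph1 ?scale1r // pnatr_eq0.
rewrite Ex; apply: CpZ; first by rewrite invr_ge0 ler0n.
apply: Cp_sum => i _; apply: Cp_sum => j _.
have [s [Hs ->]] := HJ i j.
rewrite (big_morph (Mf i j) (@MfD n i j) (Mf0 i j)) big_seq.
apply: Cp_sum => ax axs.
have Hg := Hs ax axs.
rewrite /Mf starZ ?gen_star //; last exact: Hinv.
rewrite -!tensZl -tensDl; exact: tens_gen.
Qed.
Lemma mstarD n (x y : 'M[V]_n) : mx_star star (x + y) = mx_star star x + mx_star star y.
Proof. exact: (mx_starD Hinv). Qed.
Lemma mstarN n (x : 'M[V]_n) : mx_star star (- x) = - mx_star star x.
Proof. exact: (mx_starN Hinv). Qed.
Lemma mstarR n r (x : 'M[V]_n) : mx_star star (mx_rscale r x) = mx_rscale r (mx_star star x).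
Proof. exact: (mx_star_rscale Hinv). Qed.

Lemma eqm_of n (a b : 'M[V]_n) : (forall i j, J ((a - b) i j)) -> mx_eqmod J a b.
Proof. by move=> H i j; have := H i j; rewrite !mxE. Qed.
Lemma eqm_to n (a b : 'M[V]_n) : mx_eqmod J a b -> forall i j, J ((a - b) i j).
Proof. by move=> H i j; rewrite !mxE; exact: H. Qed.
Lemma eqm_refl n (a : 'M[V]_n) : mx_eqmod J a a.
Proof. by move=> i j; rewrite subrr; exact: J0. Qed.
Lemma eqm_sym n (a b : 'M[V]_n) : mx_eqmod J a b -> mx_eqmod J b a.
Proof. by move=> H i j; rewrite -opprB; apply: JN; exact: H. Qed.
Lemma eqm_trans n (a b c : 'M[V]_n) : mx_eqmod J a b -> mx_eqmod J b c -> mx_eqmod J a c.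
Proof.
by move=> H1 H2 i j; rewrite -(subrK (b i j) (a i j)) -addrA; apply: JD; [exact: H1| exact: H2].
Qed.
Lemma eqm_add n (a b c d : 'M[V]_n) :
  mx_eqmod J a b -> mx_eqmod J c d -> mx_eqmod J (a + c) (b + d).
Proof.
move=> H1 H2 i j; rewrite !mxE opprD addrACA; apply: JD; [exact: H1| exact: H2].
Qed.
Lemma eqm_neg n (a b : 'M[V]_n) : mx_eqmod J a b -> mx_eqmod J (- a) (- b).
Proof. by move=> H i j; rewrite !mxE -opprD; apply: JN; exact: H. Qed.

Lemma halfV (v : V) : (2^-1 : R)%:C *: v + (2^-1 : R)%:C *: v = v.
Proof.
rewrite -scalerDl -rmorphD (_ : 2^-1 + 2^-1 = 1 :> R) ?rmorph1 ?scale1r //.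
by lra.
Qed.

Lemma mx_starK n (x : 'M[V]_n) : mx_star star (mx_star star x) = x.
Proof. by apply/matrixP => i j; rewrite !mxE starK //; exact: Hinv. Qed.

Lemma herm_rep n (x : 'M[V]_n) : mx_eqmod J (mx_star star x) x ->
  exists h, mx_star star h = h /\ mx_eqmod J x h.
Proof.
move=> Hx; exists (mx_rscale (2^-1) (x + mx_star star x)); split.
  by rewrite mstarR mstarD mx_starK addrC.
move=> i j; rewrite !mxE.
set a := x i j; set b := star (x j i); set k := (2^-1 : R)%:C.
rewrite -{1}(halfV a) -/k scalerDr opprD addrACA subrr add0r -scalerBr.
apply: JZ; rewrite -opprB; apply: JN.
by have := Hx i j; rewrite !mxE.
Qed.

Lemma mx_star_diagv n (v : V) : star v = v -> mx_star star (diagv n v) = diagv n v.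
Proof. by move=> hv; rewrite diagv_tens mx_star_tens //; [exact: Hinv| exact: herm1]. Qed.

Lemma Kp_eps (eps : R) n : 0 <= eps -> K n (diagv n (eps%:C *: p)).
Proof.
move=> e0; apply: Kdiag; rewrite mx1Z; case: Kcone => _ HZ _; exact: HZ.
Qed.

Lemma not_Jp : alpha_m K e p = 1 -> ~ J p.
Proof.
move=> Ha Jp_.
have Hm : CP (- mx1 p).
  apply: Gherm.
    by rewrite mstarN (@mx_star_mx1 R V star p) starp.
  by move=> i j; rewrite !mxE; apply: JN.
have [_ /(_ (2^-1) _) []] := Hm; first by rewrite invr_gt0 ltr0n.
move=> t [t0 Kt].
set w := - p + q (2^-1) t.
have Kw : K 1%N (mx1 w).
  suff -> : mx1 w = - mx1 p + diagv 1 (q (2^-1) t) by [].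
  by apply/matrixP => a b; rewrite !ord1 !mxE eqxx.
move: Ha; rewrite /alpha_m; set S := (X in sup X) => HS.
have hS : has_sup S.
  apply: NNPP => /sup_out; rewrite HS => /eqP; by rewrite oner_eq0.
set d := (2 * t + 2)^-1.
have t2 : 0 < 2 * t + 2 by apply: addr_gt0 => //; apply: mulr_gt0.
have d0 : 0 < d by rewrite invr_gt0.
have hd : d * (2 * t + 2) = 1 by rewrite mulVf // gt_eqF.
have [r [phi [[phiL phiP phie] Hr]] Hr2] := sup_adherent d0 hS.
rewrite HS in Hr2.
have phiD u v : phi (u + v) = phi u + phi v by rewrite -{1}(scale1r u) phiL mul1r.
have phiZ a u : phi (a *: u) = a * phi u.
  have phi0 : phi 0 = 0.
    have := phiD 0 0; rewrite addr0 => /(congr1 (fun z => z - phi 0)).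
    by rewrite subrr addrK => H; rewrite -H.
  by rewrite -(addr0 (a *: u)) phiL phi0 addr0.
have phiN u : phi (- u) = - phi u by rewrite -scaleN1r phiZ mulN1r.
have pp : phi p = r%:C.
  by rewrite Hr ger0_norm //; apply: phiP.
have := phiP _ Kw.
rewrite /w /q phiD phiN !phiD !phiZ phiD phiN phie pp.
have E : - r%:C + ((2^-1)%:C * r%:C + t%:C * (1 - r%:C)) =
    (- r + (2^-1 * r + t * (1 - r)))%:C :> C.
  by rewrite !rmorphD !rmorphN !rmorphM rmorphB rmorph1.
rewrite E ler0c.
have h1 : t * (1 - r) < t * d.
  by rewrite ltr_pM2l //; lra.
nra.
Qed.
Lemma main_opsys : opsys_mod star J (@Defs.Cp R V star K e p) p.
Proof.
have Jsub : is_subspace J by split; [exact: J0| move=> a x y; exact: JDZ].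
split; first exact: Hinv.
split; first exact: Jsub.
split; first exact: Jstar.
split.
  move=> n x [y [Cy Hxy]] i j; rewrite !mxE.
  have hy := Cp_herm Cy.
  have -> : star (x j i) - x i j = star (x j i - y j i) + (y i j - x i j).
    rewrite (starB Hinv).
    have -> : star (y j i) = y i j by rewrite -{2}hy mxE.
    by rewrite addrA subrK.
  apply: JD; first by apply: Jstar; exact: Hxy.
  by rewrite -opprB; apply: JN; exact: Hxy.
split.
  move=> n x y [x' [Cx Hx]] [y' [Cy Hy]]; exists (x' + y'); split.
    exact: CpD.
  exact: eqm_add.
split.
  move=> n r x r0 [y [Cy Hxy]]; exists (mx_rscale r y); split; first exact: CpZ.
  by move=> i j; rewrite !mxE -scalerBr; apply: JZ; exact: Hxy.
split.
  move=> n m alpha x [y [Cy Hxy]]; exists (mx_conj_act alpha y); split.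
    exact: Cp_conj.
  apply: eqm_of => i j; rewrite -conj_actN -conj_actD !mxE.
  apply: Jsum => k _; apply: Jsum => l _; apply: JZ.
  by rewrite !mxE; exact: Hxy.
split.
  move=> n x [y1 [C1 H1]] [y2 [C2 H2]].
  have Hd : CP (- (y1 + y2)).
    apply: Gherm.
      by rewrite mstarN mstarD (Cp_herm C1) (Cp_herm C2).
    move=> i j; rewrite !mxE; apply: JN.
    have := eqm_add (eqm_sym H1) (eqm_sym H2) i j.
    by rewrite !mxE subrr subr0.
  have Cn1 : CP (- y1).
    have -> : - y1 = y2 + - (y1 + y2) by rewrite opprD addrCA subrr addr0.
    exact: CpD.
  have Hy1 := Pent C1 Cn1.
  move=> i j; rewrite !mxE subr0.
  rewrite -(subrK (y1 i j) (x i j)); apply: JD; [exact: H1| exact: Hy1].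
split; first by rewrite starp subrr; exact: J0.
split.
  move=> n x hx.
  have [h [hh Hxh]] := herm_rep hx.
  have [_ [_ [_ [_ [_ [_ [_ [_ [_ [Hunit _]]]]]]]]]] := Hop.
  have h0 : mx_eqmod (fun v => v = 0) (mx_star star h) h by move=> i j; rewrite hh subrr.
  have [r [r0 /satK Kr]] := Hunit n h h0.
  exists r; split => //.
  exists (h + mx_rscale r (diagv n p)); split; last first.
    by apply: eqm_add => //; exact: eqm_refl.
  split.
    by rewrite mstarD mstarR mx_star_diagv ?hh // starp.
  move=> eps eps0; exists r; split => //.
  have := KD Kr (Kp_eps n (ltW eps0)).
  rewrite -!addrA !rscale_diagv -!diagvD.
  have -> : r%:C *: p + (eps%:C *: p + r%:C *: (e - p)) = r%:C *: e + eps%:C *: p.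
    by rewrite scalerBr addrCA (addrC (r%:C *: p)) subrK addrC.
  by [].
move=> n x hx Hx.
have [y1 [C1 H1]] := Hx 1 ltr01.
set y := y1 - diagv n p.
have hy : mx_star star y = y.
  by rewrite mstarD mstarN mx_star_diagv ?(Cp_herm C1) // starp.
have Hxy : mx_eqmod J x y.
  have -> : x = (x + mx_rscale 1 (diagv n p)) - diagv n p.
    by rewrite rscale_diagv scale1r addrK.
  by apply: eqm_add => //; exact: eqm_refl.
exists y; split => //.
apply: Cp_shift => // eps eps0.
have [ye [Ce He]] := Hx eps eps0.
have Hd : CP ((y + diagv n (eps%:C *: p)) - ye).
  apply: Gherm.
    rewrite mstarD mstarN mstarD mx_star_diagv ?hy ?(Cp_herm Ce) //.
    by rewrite (starZ Hinv) conjcR starp.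
  apply: eqm_to; apply: eqm_trans (eqm_add (eqm_sym Hxy) (eqm_refl _)) _.
  by rewrite -rscale_diagv.
have -> : y + diagv n (eps%:C *: p) = ye + ((y + diagv n (eps%:C *: p)) - ye).
  by rewrite [RHS]addrC subrK.
exact: CpD.
Qed.

End Main.

Local Close Scope complex_scope.

Theorem theorem4p9 (R : realType) (V : lmodType R[i]) (star : V -> V)
  (K : forall n, 'M[V]_n -> Prop) (e p : V) :
  opsys star K e ->
  K 1%N (mx1 p) -> K 1%N (mx1 (e - p)) ->
  alpha_m K e p = 1 ->
  opsys_mod star (Jp star K e p) (Cp star K e p) p /\ ~ Jp star K e p p.
Proof.
move=> Hop Hp Hep Ha; split.
  exact: (@main_opsys R V star K e p Hop Hp Hep).
exact: (@not_Jp R V star K e p Hop Hp Hep Ha).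
Qed.
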